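(* Let $M\in\mathbb{N}$, $M\ge1$, and let $r$ be a strong solution of the BVP. Then $r(R)\ge0$ for all $R\in[0,1]$ and $\dot r(R)\ge0$ for all $R\in(0,1]$.
   Context: Fix constants $\gamma>0$, $s_0\ge0$, $\kappa\ge-\gamma s_0$ and a convex function $\rho\in C^\infty(\mathbb{R})$ with $\rho(s)=0$ for $s\le0$, $\rho(s)=\gamma s+\kappa$ for $s\ge s_0$, and $\rho=\rho_1$ on $[0,s_0]$ where $\rho_1$ is smooth and convex with $\rho_1(0)=0$, $\rho_1(s_0)=\gamma s_0+\kappa$. For $M\in\mathbb{N}\setminus\{0\}$ and a function $r$ on $(0,1]$ let $d(R)=\frac{Mr(R)\dot r(R)}{R}$ and $Lr(R)=\frac{M^2r}{R}-\dot r-R\ddot r$. A strong solution of the BVP is a function $r\in C([0,1])\cap C^\infty((0,1])$ with $Lr=M\rho''(d)\dot d\,r$ on $(0,1)$, $r(0)=0$ and $r(1)=1$. *)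

(* Defs.v *)
From Stdlib Require Import Reals.
From Coquelicot Require Import Coquelicot.
Open Scope R_scope.

Definition smooth_R (f : R -> R) : Prop :=
  forall (n : nat) (x : R), ex_derive_n f n x.

Definition convex_R (f : R -> R) : Prop :=
  forall x y t, 0 <= t <= 1 -> f (t * x + (1 - t) * y) <= t * f x + (1 - t) * f y.

Definition admissible_rho (gamma s0 kappa : R) (rho : R -> R) : Prop :=
  0 < gamma /\ 0 <= s0 /\ - gamma * s0 <= kappa /\
  smooth_R rho /\ convex_R rho /\
  (forall s, s <= 0 -> rho s = 0) /\
  (forall s, s0 <= s -> rho s = gamma * s + kappa) /\
  (exists rho1 : R -> R, smooth_R rho1 /\ convex_R rho1 /\
     rho1 0 = 0 /\ rho1 s0 = gamma * s0 + kappa /\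
     (forall s, 0 <= s <= s0 -> rho s = rho1 s)).

(* r in C^infty((0,1]): all derivatives exist on (0,1) and each extends
   continuously (finite one-sided limit) to R = 1. *)
Definition smooth_0_1 (r : R -> R) : Prop :=
  (forall (n : nat) (x : R), 0 < x < 1 -> ex_derive_n r n x) /\
  (forall n : nat, exists l : R, filterlim (Derive_n r n) (at_left 1) (locally l)).

Definition dfun (M : nat) (r : R -> R) : R -> R :=
  fun x => INR M * r x * Derive r x / x.

Definition Lop (M : nat) (r : R -> R) : R -> R :=
  fun x => INR M ^ 2 * r x / x - Derive r x - x * Derive_n r 2 x.

Definition strong_solution (rho : R -> R) (M : nat) (r : R -> R) : Prop :=
  (forall x, 0 <= x <= 1 ->
     filterlim r (within (fun y => 0 <= y <= 1) (locally x)) (locally (r x))) /\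
  smooth_0_1 r /\
  (forall x, 0 < x < 1 ->
     Lop M r x = INR M * Derive_n rho 2 (dfun M r x) * Derive (dfun M r) x * r x) /\
  r 0 = 0 /\ r 1 = 1.

(* Main.v *)
Require Import Defs.
From Stdlib Require Import Reals Lra.
From Coquelicot Require Import Coquelicot.
Open Scope R_scope.

Lemma ball_R x (e:posreal) y : ball x e y <-> Rabs (y - x) < e. Proof. reflexivity. Qed.

Lemma deriv_pos_loc f x l : derivable_pt_lim f x l -> 0 < l ->
  exists d, 0 < d /\ forall h, 0 < h < d -> f x < f (x + h) /\ f (x - h) < f x.
Proof.
  intros H Hl. destruct (H (l/2) ltac:(lra)) as [d Hd].
  exists d; split; [apply cond_pos|]. intros h Hh. split.
  - assert (A := Hd h ltac:(lra) ltac:(rewrite Rabs_right; lra)).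
    apply Rabs_def2 in A.
    set (q := (f (x + h) - f x) / h) in A.
    assert (f (x+h) - f x = q * h) by (unfold q; field; lra). nra.
  - assert (A := Hd (-h) ltac:(lra) ltac:(rewrite Rabs_left; lra)).
    apply Rabs_def2 in A.
    set (q := (f (x + - h) - f x) / - h) in A.
    assert (f (x + -h) - f x = q * (-h)) by (unfold q; field; lra).
    replace (x - h) with (x + - h) by ring. nra.
Qed.

Lemma deriv_neg_loc f x l : derivable_pt_lim f x l -> l < 0 ->
  exists d, 0 < d /\ forall h, 0 < h < d -> f (x + h) < f x /\ f x < f (x - h).
Proof.
  intros H Hl.
  destruct (deriv_pos_loc (opp_fct f) x (-l)) as [d [Hd Hh]].
  - apply derivable_pt_lim_opp; exact H.
  - lra.
  - exists d; split; auto. intros h Hh'. destruct (Hh h Hh') as [A B].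
    unfold opp_fct in A, B. lra.
Qed.

Lemma zero_deriv (f : R -> R) : (forall s, s <= 0 -> f s = 0) ->
  forall s, s <= 0 -> ex_derive f s -> Derive f s = 0.
Proof.
  intros Hf s Hs Hex. pose proof (Derive_correct _ _ Hex) as H.
  apply is_derive_Reals in H. set (l := Derive f s) in *.
  destruct (Req_dec l 0) as [|Hne]; auto. exfalso.
  destruct (H (Rabs l) (Rabs_pos_lt _ Hne)) as [d Hd].
  pose proof (cond_pos d).
  specialize (Hd (-(d/2)) ltac:(lra) ltac:(rewrite Rabs_left; lra)).
  rewrite !Hf in Hd by lra.
  replace ((0 - 0) / - (d / 2) - l) with (- l) in Hd by (field; lra).
  rewrite Rabs_Ropp in Hd. lra.
Qed.

Lemma decr_gen (f : R -> R) a b : a < b -> (forall t, a <= t <= b -> ex_derive f t) ->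
  exists c, a <= c <= b /\ f b - f a = Derive f c * (b - a).
Proof.
  intros Hab Hd. pose proof (MVT_gen f a b (Derive f)) as H. simpl in H.
  rewrite Rmin_left, Rmax_right in H by lra.
  apply H.
  - intros x Hx. apply Derive_correct, Hd; lra.
  - intros x Hx. apply continuity_pt_filterlim. apply (ex_derive_continuous f x). apply Hd; lra.
Qed.

Lemma decr_le (f : R -> R) a b : a < b -> (forall t, a <= t <= b -> ex_derive f t) ->
  (forall t, a <= t <= b -> Derive f t <= 0) -> f b <= f a.
Proof.
  intros Hab Hd Hn. destruct (decr_gen f a b Hab Hd) as [c [Hc E]].
  specialize (Hn c Hc). nra.
Qed.

Lemma decr_lt (f : R -> R) a b : a < b -> (forall t, a <= t <= b -> ex_derive f t) ->
  (forall t, a <= t <= b -> Derive f t < 0) -> f b < f a.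
Proof.
  intros Hab Hd Hn. destruct (decr_gen f a b Hab Hd) as [c [Hc E]].
  specialize (Hn c Hc). nra.
Qed.

Lemma within_cont (D : R -> Prop) (r : R -> R) x :
  filterlim r (within D (locally x)) (locally (r x)) ->
  forall eps, 0 < eps -> exists d, 0 < d /\
    forall y, D y -> Rabs (y - x) < d -> Rabs (r y - r x) < eps.
Proof.
  intros H eps He.
  apply filterlim_locally with (eps := mkposreal eps He) in H.
  destruct H as [d Hd]. exists d; split; [apply cond_pos|].
  intros y Dy Hy. exact (Hd y Hy Dy).
Qed.

Theorem lemma2p3 (gamma s0 kappa : R) (rho : R -> R) (M : nat) (r : R -> R) :
  admissible_rho gamma s0 kappa rho ->
  (1 <= M)%nat ->
  strong_solution rho M r ->
  (forall x, 0 <= x <= 1 -> 0 <= r x) /\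
  (forall x, 0 < x < 1 -> 0 <= Derive r x) /\
  (forall l, filterlim (Derive r) (at_left 1) (locally l) -> 0 <= l).
Proof.
  intros [Hg [Hs0 [Hk [Hsm [Hcv [Hneg [Hpos Hr1]]]]]]] HM
         [Hcont [[Hsm1 Hsm2] [Heq [Hr0 Hr1']]]].
  assert (HMp : 0 < INR M ^ 2).
  { assert (1 <= INR M) by (apply (le_INR 1); exact HM). nra. }
  assert (Hrho2 : forall s, s <= 0 -> Derive_n rho 2 s = 0).
  { intros s Hs. change (Derive (Derive_n rho 1) s = 0).
    apply zero_deriv; [| exact Hs | exact (Hsm 2%nat s)].
    intros u Hu. change (Derive (Derive_n rho 0) u = 0).
    apply zero_deriv; [| exact Hu | exact (Hsm 1%nat u)].
    intros w Hw. apply Hneg; exact Hw. }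
  assert (Hd1 : forall t, 0 < t < 1 -> ex_derive r t).
  { intros t Ht. exact (Hsm1 1%nat t Ht). }
  assert (Hd2 : forall t, 0 < t < 1 -> ex_derive (Derive r) t).
  { intros t Ht. exact (Hsm1 2%nat t Ht). }
  assert (Hgd : forall t, 0 < t < 1 ->
    derivable_pt_lim (fun x => x * Derive r x) t (Derive r t + t * Derive_n r 2 t)).
  { intros t Ht. apply is_derive_Reals.
    assert (A := is_derive_mult (fun x : R => x) (Derive r) t 1 (Derive (Derive r) t)
      (is_derive_id t) (Derive_correct _ _ (Hd2 t Ht)) Rmult_comm).
    simpl in A. change (Derive_n r 2 t) with (Derive (Derive r) t).
    replace (Derive r t + t * Derive (Derive r) t)
      with (plus (mult 1 (Derive r t)) (mult t (Derive (Derive r) t))).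
    exact A. unfold plus, mult; simpl. ring. }
  assert (HE : forall t, 0 < t < 1 -> Derive_n rho 2 (dfun M r t) = 0 ->
     Derive r t + t * Derive_n r 2 t = INR M ^ 2 * r t / t).
  { intros t Ht H0. specialize (Heq t Ht). unfold Lop in Heq. rewrite H0 in Heq.
    rewrite Rmult_0_r, !Rmult_0_l in Heq. lra. }
  assert (Hc0 := within_cont _ r 0 (Hcont 0 ltac:(lra))).
  assert (Hc1 := within_cont _ r 1 (Hcont 1 ltac:(lra))).
  assert (P1 : forall x, 0 <= x <= 1 -> 0 <= r x).
  { intros x Hx. destruct (Rle_or_lt 0 (r x)) as [|Hlt]; auto. exfalso.
    assert (Hx0 : x <> 0) by (intro; subst; lra).
    assert (Hx1 : x <> 1) by (intro; subst; lra).
    destruct (Hc0 (- r x) ltac:(lra)) as [d0 [Hd0 H0]].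
    destruct (Hc1 (1 - r x) ltac:(lra)) as [d1 [Hd1' H1]].
    set (a := Rmin (d0/2) (x/2)).
    assert (Ha0 : 0 < a) by (apply Rmin_glb_lt; lra).
    assert (Ha1 : a <= d0/2) by apply Rmin_l.
    assert (Ha2 : a <= x/2) by apply Rmin_r.
    set (b := Rmax (1 - d1/2) ((1+x)/2)).
    assert (Hb0 : b < 1) by (apply Rmax_lub_lt; lra).
    assert (Hb1 : 1 - d1/2 <= b) by apply Rmax_l.
    assert (Hb2 : (1+x)/2 <= b) by apply Rmax_r.
    assert (Hra : r x < r a).
    { specialize (H0 a ltac:(lra) ltac:(rewrite Rabs_right; lra)).
      rewrite Hr0 in H0. apply Rabs_def2 in H0. lra. }
    assert (Hrb : r x < r b).
    { specialize (H1 b ltac:(lra) ltac:(rewrite Rabs_left; lra)).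
      rewrite Hr1' in H1. apply Rabs_def2 in H1. lra. }
    assert (Hct : forall c, a <= c <= b -> continuity_pt r c).
    { intros c Hc. apply continuity_pt_filterlim.
      apply (ex_derive_continuous r c). apply Hd1; lra. }
    destruct (continuity_ab_min r a b ltac:(lra) Hct) as [m [Hmin Hm]].
    assert (Hrm : r m <= r x) by (apply Hmin; lra).
    assert (Hma : a < m) by (destruct (Rle_lt_or_eq_dec a m) as [|E]; [lra|auto|subst; lra]).
    assert (Hmb : m < b) by (destruct (Rle_lt_or_eq_dec m b) as [|E]; [lra|auto|rewrite E in Hrm; lra]).
    assert (Hdm : Derive r m = 0).
    { pose proof (proj1 (is_derive_Reals _ _ _) (Derive_correct _ _ (Hd1 m ltac:(lra)))) as Dm.
      destruct (Rtotal_order (Derive r m) 0) as [Hn|[E|Hp]]; auto; exfalso.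
      - destruct (deriv_neg_loc _ _ _ Dm Hn) as [d [Hd Hh]].
        set (h := Rmin d (b - m) / 2).
        assert (0 < Rmin d (b - m)) by (apply Rmin_glb_lt; lra).
        pose proof (Rmin_l d (b-m)). pose proof (Rmin_r d (b-m)).
        destruct (Hh h ltac:(unfold h; lra)) as [A _].
        assert (r m <= r (m + h)) by (apply Hmin; unfold h; lra). lra.
      - destruct (deriv_pos_loc _ _ _ Dm Hp) as [d [Hd Hh]].
        set (h := Rmin d (m - a) / 2).
        assert (0 < Rmin d (m - a)) by (apply Rmin_glb_lt; lra).
        pose proof (Rmin_l d (m-a)). pose proof (Rmin_r d (m-a)).
        destruct (Hh h ltac:(unfold h; lra)) as [_ A].
        assert (r m <= r (m - h)) by (apply Hmin; unfold h; lra). lra. }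
    assert (Hdf : dfun M r m = 0) by (unfold dfun; rewrite Hdm; unfold Rdiv; ring).
    assert (Hgm := HE m ltac:(lra) ltac:(rewrite Hdf; apply Hrho2; lra)).
    assert (Hneg' : INR M ^ 2 * r m / m < 0).
    { unfold Rdiv. assert (0 < / m) by (apply Rinv_0_lt_compat; lra).
      assert (INR M ^ 2 * r m < 0) by nra. nra. }
    destruct (deriv_neg_loc _ _ _ (Hgd m ltac:(lra)) ltac:(lra)) as [d [Hd Hh]].
    rewrite Hdm, Rmult_0_r in Hh.
    assert (Hneg2 : forall h, 0 < h < d -> m + h < 1 -> Derive r (m + h) < 0).
    { intros h Hh1 Hh2. destruct (Hh h Hh1) as [A _]. nra. }
    set (h := Rmin d (b - m) / 2).
    assert (0 < Rmin d (b - m)) by (apply Rmin_glb_lt; lra).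
    pose proof (Rmin_l d (b-m)). pose proof (Rmin_r d (b-m)).
    assert (S1 : r (m + h) < r (m + h/2)).
    { apply decr_lt. unfold h; lra.
      - intros t Ht. apply Hd1. unfold h in Ht; lra.
      - intros t Ht. replace t with (m + (t - m)) by ring.
        apply Hneg2; unfold h in Ht; lra. }
    assert (S2 : r (m + h/2) <= r m).
    { apply decr_le. unfold h; lra.
      - intros t Ht. apply Hd1. unfold h in Ht; lra.
      - intros t Ht. destruct (Req_dec t m) as [E|E]. rewrite E, Hdm; lra.
        replace t with (m + (t - m)) by ring. left.
        apply Hneg2; unfold h in Ht; lra. }
    assert (r m <= r (m + h)) by (apply Hmin; unfold h; lra). lra. }
  assert (P2 : forall x0, 0 < x0 < 1 -> 0 <= Derive r x0).
  { intros x0 Hx0. destruct (Rle_or_lt 0 (Derive r x0)) as [|Hlt]; auto. exfalso.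
    set (c := x0 * Derive r x0).
    assert (Hc : c < 0) by (unfold c; nra).
    set (eps := - c / (2 * x0)).
    assert (Heps : 0 < eps) by (unfold eps; apply Rdiv_lt_0_compat; lra).
    assert (Hex0 : eps * x0 = - c / 2) by (unfold eps; field; lra).
    assert (Hneg1 : forall y, 0 < y < x0 -> Derive r y < 0).
    { intros y Hy.
      set (phi := fun t => t * Derive r t + eps * t).
      assert (Hpd : forall t, 0 < t < 1 ->
        derivable_pt_lim phi t ((Derive r t + t * Derive_n r 2 t) + eps * 1)).
      { intros t Ht. exact (derivable_pt_lim_plus (fun x => x * Derive r x)
           (fun x => eps * x) t _ _ (Hgd t Ht)
           (derivable_pt_lim_scal id eps t 1 (derivable_pt_lim_id t))). }
      assert (Hct : forall c, y <= c <= x0 -> continuity_pt phi c).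
      { intros c0 Hcc. apply (derivable_continuous_pt phi c0).
        exists (Derive r c0 + c0 * Derive_n r 2 c0 + eps * 1).
        apply Hpd; lra. }
      destruct (continuity_ab_min phi y x0 ltac:(lra) Hct) as [z [Hmin Hz]].
      assert (Hpz : phi z <= phi x0) by (apply Hmin; lra).
      assert (Hpx0 : phi x0 = c / 2) by (unfold phi; rewrite Hex0; unfold c; lra).
      assert (Hgz : z * Derive r z < 0).
      { rewrite Hpx0 in Hpz. unfold phi in Hpz; cbv beta in Hpz.
        assert (0 < eps * z) by nra. lra. }
      assert (Hrz : Derive r z < 0) by nra.
      assert (Hrz0 : 0 <= r z) by (apply P1; lra).
      assert (Hdz : dfun M r z <= 0).
      { unfold dfun, Rdiv. assert (0 < / z) by (apply Rinv_0_lt_compat; lra).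
        assert (0 <= INR M) by apply pos_INR.
        assert (0 <= INR M * r z) by nra.
        assert (INR M * r z * Derive r z <= 0) by nra. nra. }
      assert (Hgz' := HE z ltac:(lra) (Hrho2 _ Hdz)).
      assert (Hq : 0 <= INR M ^ 2 * r z / z).
      { unfold Rdiv. assert (0 < / z) by (apply Rinv_0_lt_compat; lra).
        assert (0 <= INR M ^ 2 * r z) by nra. nra. }
      assert (Hzy : z = y).
      { destruct (Rle_lt_or_eq_dec y z) as [Hlt'|E]; [lra| |auto]. exfalso.
        destruct (deriv_pos_loc _ _ _ (Hpd z ltac:(lra)) ltac:(lra)) as [d [Hd Hh]].
        set (h := Rmin d (z - y) / 2).
        assert (0 < Rmin d (z - y)) by (apply Rmin_glb_lt; lra).
        pose proof (Rmin_l d (z-y)). pose proof (Rmin_r d (z-y)).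
        destruct (Hh h ltac:(unfold h; lra)) as [_ A].
        assert (phi z <= phi (z - h)) by (apply Hmin; unfold h; lra). lra. }
      subst z. rewrite Hpx0 in Hpz. unfold phi in Hpz; cbv beta in Hpz.
      assert (0 < eps * y) by nra. nra. }
    assert (Hneg2 : forall y, 0 < y <= x0 -> Derive r y < 0).
    { intros y Hy. destruct (Req_dec y x0) as [E|E]. subst; lra. apply Hneg1; lra. }
    assert (S1 : r x0 < r (x0/2)).
    { apply decr_lt. lra.
      - intros t Ht. apply Hd1; lra.
      - intros t Ht. apply Hneg2; lra. }
    assert (S2 : r (x0/2) <= 0).
    { destruct (Rle_or_lt (r (x0/2)) 0) as [|Hp]; auto. exfalso.
      destruct (Hc0 (r (x0/2)) Hp) as [d [Hd H0]].
      set (e := Rmin d (x0/2) / 2).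
      assert (0 < Rmin d (x0/2)) by (apply Rmin_glb_lt; lra).
      pose proof (Rmin_l d (x0/2)). pose proof (Rmin_r d (x0/2)).
      specialize (H0 e ltac:(unfold e; lra) ltac:(rewrite Rabs_right; unfold e; lra)).
      rewrite Hr0 in H0. apply Rabs_def2 in H0.
      assert (r (x0/2) <= r e).
      { apply decr_le. unfold e; lra.
        - intros t Ht. apply Hd1; unfold e in Ht; lra.
        - intros t Ht. left. apply Hneg2; unfold e in Ht; lra. }
      lra. }
    assert (0 <= r x0) by (apply P1; lra). lra. }
  split; [exact P1|]. split; [exact P2|].
  intros l Hl. destruct (Rle_or_lt 0 l) as [|Hlt]; auto. exfalso.
  assert (Hel : 0 < -l/2) by lra.
  apply filterlim_locally with (eps := mkposreal (-l/2) Hel) in Hl.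
  destruct Hl as [d Hd]. pose proof (cond_pos d).
  assert (Rmax (1 - d/2) (1/2) < 1) by (apply Rmax_lub_lt; clear -H; lra).
  pose proof (Rmax_l (1 - d/2) (1/2)). pose proof (Rmax_r (1 - d/2) (1/2)).
  set (y := Rmax (1 - d/2) (1/2)) in *.
  assert (B : ball 1 d y). { apply ball_R. clear Hd. rewrite Rabs_left; lra. }
  specialize (Hd y B H0). clear -Hd Hlt P2 H0 H1 H2 H. apply ball_R in Hd. simpl in Hd. apply Rabs_def2 in Hd.
  assert (0 <= Derive r y) by (apply P2; lra).
  unfold minus, plus, opp in Hd; simpl in Hd. lra.
Qed.
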